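(* Let $\sigma_1,\sigma_2\subset\mathbb{Q}^n$ be rational polyhedral cones and suppose there is a vector $\mathbf{a}\in\sigma_1\cap\sigma_2$ such that $\mathrm{span}_{\mathbb{Q}}(\sigma_1)\cap\mathrm{span}_{\mathbb{Q}}(\sigma_2)=\mathbb{Q}\mathbf{a}$. Let $\sigma_1\oplus\sigma_2:=\mathrm{pos}_{\mathbb{Q}}(\sigma_1\cup\sigma_2)$. Then $\sigma_1$ and $\sigma_2$ are both strongly convex if and only if $\sigma_1\oplus\sigma_2$ is strongly convex.
   Context: For $B\subset\mathbb{Q}^n$, $\mathrm{span}_{\mathbb{Q}}(B)=\{\sum q_i\mathbf{b}_i: q_i\in\mathbb{Q},\mathbf{b}_i\in B\}$ (finite sums) and $\mathrm{pos}_{\mathbb{Q}}(B)=\{\sum q_i\mathbf{b}_i: q_i\in\mathbb{Q}_{\ge 0},\mathbf{b}_i\in B\}$. A rational polyhedral cone is $\mathrm{pos}_{\mathbb{Q}}(B)$ for a finite $B\subset\mathbb{Q}^n$. A cone $\sigma$ is strongly convex if $\sigma\cap(-\sigma)=\{\mathbf{0}\}$. *)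

(* Defs.v *)
From mathcomp Require Import all_boot all_order all_algebra.
Set Implicit Arguments. Unset Strict Implicit. Unset Printing Implicit Defensive.
Import Order.TTheory GRing.Theory Num.Theory.
Local Open Scope ring_scope.

Definition vecQ (n : nat) := 'rV[rat]_n.

Definition spanQ (n : nat) (B : vecQ n -> Prop) : vecQ n -> Prop :=
  fun v => exists (k : nat) (b : 'I_k -> vecQ n) (q : 'I_k -> rat),
    (forall i, B (b i)) /\ v = \sum_(i < k) q i *: b i.

Definition posQ (n : nat) (B : vecQ n -> Prop) : vecQ n -> Prop :=
  fun v => exists (k : nat) (b : 'I_k -> vecQ n) (q : 'I_k -> rat),
    (forall i, B (b i)) /\ (forall i, 0 <= q i) /\ v = \sum_(i < k) q i *: b i.

Definition rational_polyhedral_cone (n : nat) (sigma : vecQ n -> Prop) : Prop :=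
  exists B : seq (vecQ n), forall v, sigma v <-> posQ (fun x => x \in B) v.

Definition strongly_convex (n : nat) (sigma : vecQ n -> Prop) : Prop :=
  forall v, sigma v -> sigma (- v) -> v = 0.

Definition cone_sum (n : nat) (s1 s2 : vecQ n -> Prop) : vecQ n -> Prop :=
  posQ (fun v => s1 v \/ s2 v).

(* Main.v *)
Require Import Defs.
From mathcomp Require Import all_boot all_order all_algebra.
Import Order.TTheory GRing.Theory Num.Theory.
Local Open Scope ring_scope.
Set Implicit Arguments. Unset Strict Implicit.

Lemma posQ0 n (P : vecQ n -> Prop) : posQ P 0.
Proof.
exists 0%N, (fun _ => 0), (fun _ => 0); split; first by case.
by split; [case| rewrite big_ord0].
Qed.

Lemma posQD n (P : vecQ n -> Prop) x y : posQ P x -> posQ P y -> posQ P (x + y).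
Proof.
move=> [k1 [b1 [q1 [Hb1 [Hq1 ->]]]]] [k2 [b2 [q2 [Hb2 [Hq2 ->]]]]].
exists (k1 + k2)%N,
  (fun i => match split i with inl j => b1 j | inr j => b2 j end),
  (fun i => match split i with inl j => q1 j | inr j => q2 j end).
split; first by move=> i; case: (split i).
split; first by move=> i; case: (split i).
rewrite big_split_ord /=; congr (_ + _); apply: eq_bigr => i _.
  by rewrite (unsplitK (inl _ i)).
by rewrite (unsplitK (inr _ i)).
Qed.

Lemma posQZ n (P : vecQ n -> Prop) c x : 0 <= c -> posQ P x -> posQ P (c *: x).
Proof.
move=> hc [k [b [q [Hb [Hq ->]]]]].
exists k, b, (fun i => c * q i); split=> //; split; first by move=> i; rewrite mulr_ge0.
by rewrite scaler_sumr; apply: eq_bigr => i _; rewrite scalerA.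
Qed.

Lemma posQ_sub n (P : vecQ n -> Prop) x : P x -> posQ P x.
Proof.
move=> Px; exists 1%N, (fun _ => x), (fun _ => 1); split=> //; split=> //.
by rewrite big_ord1 scale1r.
Qed.

Section Cone.
Variables (n : nat) (s : vecQ n -> Prop).
Hypothesis hs : rational_polyhedral_cone s.

Lemma cone0 : s 0.
Proof. by case: hs => B HB; apply/HB/posQ0. Qed.
Lemma coneD x y : s x -> s y -> s (x + y).
Proof. by case: hs => B HB /HB hx /HB hy; apply/HB/posQD. Qed.
Lemma coneZ c x : 0 <= c -> s x -> s (c *: x).
Proof. by case: hs => B HB hc /HB hx; apply/HB/posQZ. Qed.
End Cone.

Lemma spanQ_sub n (s : vecQ n -> Prop) c x : s x -> spanQ s (c *: x).
Proof.
move=> Px; exists 1%N, (fun _ => x), (fun _ => c); split=> //.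
by rewrite big_ord1.
Qed.

Lemma cone_sum_split n (s1 s2 : vecQ n -> Prop) :
  rational_polyhedral_cone s1 -> rational_polyhedral_cone s2 ->
  forall v, cone_sum s1 s2 v -> exists x1 x2, [/\ s1 x1, s2 x2 & v = x1 + x2].
Proof.
move=> h1 h2 v [k [b [q [Hb [Hq ->]]]]].
elim: k b q Hb Hq => [|k IH] b q Hb Hq.
  exists 0, 0; rewrite big_ord0 addr0; split; [exact: cone0 h1|exact: cone0 h2|by []].
have [x1 [x2 [s1x s2x E]]] := IH (fun i => b (lift ord_max i)) (fun i => q (lift ord_max i))
   (fun i => Hb _) (fun i => Hq _).
rewrite big_ord_recr /=.
have -> : \sum_(i < k) q (widen_ord (leqnSn k) i) *: b (widen_ord (leqnSn k) i)
          = \sum_(i < k) q (lift ord_max i) *: b (lift ord_max i).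
  apply: eq_bigr => i _; have -> // : widen_ord (leqnSn k) i = lift ord_max i by apply: val_inj; rewrite /= /bump leqNgt ltn_ord.
rewrite E.
case: (Hb ord_max) => hb.
  exists (x1 + q ord_max *: b ord_max), x2; split=> //.
    by apply: coneD => //; apply: coneZ.
  by rewrite addrAC.
exists x1, (x2 + q ord_max *: b ord_max); split=> //.
  by apply: coneD => //; apply: coneZ.
by rewrite addrA.
Qed.

Theorem proposition2p2 (n : nat) (s1 s2 : 'rV[rat]_n -> Prop) (a : 'rV[rat]_n) :
  rational_polyhedral_cone s1 -> rational_polyhedral_cone s2 ->
  s1 a -> s2 a ->
  (forall v, (spanQ s1 v /\ spanQ s2 v) <-> exists c : rat, v = c *: a) ->
  ((strongly_convex s1 /\ strongly_convex s2) <-> strongly_convex (cone_sum s1 s2)).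
Proof.
move=> h1 h2 a1 a2 hspan; split.
  move=> [sc1 sc2] v /(cone_sum_split h1 h2) [x1 [x2 [sx1 sx2 ->]]]
                     /(cone_sum_split h1 h2) [y1 [y2 [sy1 sy2 E]]].
  have Hw : x1 + y1 = - (x2 + y2).
    by apply/eqP; rewrite -addr_eq0 addrACA -E subrr.
  have [c Ec] : exists c : rat, x1 + y1 = c *: a.
    apply/hspan; split.
      by rewrite -[x1 + y1]scale1r; apply: spanQ_sub; apply: coneD.
    by rewrite Hw -scaleN1r; apply: spanQ_sub; apply: coneD.
  have w0 : x1 + y1 = 0.
    case/orP: (le_total 0 c) => hc.
      apply/eqP; rewrite -oppr_eq0; apply/eqP; apply: sc2.
        by rewrite Hw opprK; apply: coneD.
      by rewrite opprK Ec; apply: coneZ.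
    apply: sc1; first by apply: coneD.
    by rewrite Ec -scaleNr; apply: coneZ => //; rewrite oppr_ge0.
  have w0' : x2 + y2 = 0 by apply/eqP; rewrite -oppr_eq0 -Hw w0.
  have ex1 : x1 = 0.
    by apply: sc1 => //; move/eqP: w0; rewrite addr_eq0 => /eqP ->; rewrite opprK.
  have ex2 : x2 = 0.
    by apply: sc2 => //; move/eqP: w0'; rewrite addr_eq0 => /eqP ->; rewrite opprK.
  by rewrite ex1 ex2 addr0.
move=> sc; split=> v hv hnv; apply: sc; apply: posQ_sub; by [left|right].
Qed.
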